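(* Let $N\ge1$, $\varphi,\gamma\in(0,1)$ with $\varphi+\gamma\ge1$, $\alpha=\min\{\varphi,\gamma\}$. Suppose the one-step transition probabilities of $(X_t)$ on $\{0,1\}^N$ have the form $$p_{t-1\to t}(\boldsymbol{x},\boldsymbol{y})=\varphi^{\|\boldsymbol{y}\|}\bar\varphi^{N-\|\boldsymbol{y}\|}\Big\{1+\sum_{A\subseteq[N],A\neq\emptyset}\kappa_{t,A}\prod_{k\in A}\Big(1-\frac{\boldsymbol{y}[k]}{\varphi}\Big)\Big(1-\frac{\boldsymbol{x}[k]}{\gamma}\Big)\Big\},\quad \kappa_{t,A}=\Big(\frac{\alpha}{\bar\alpha}\Big)^{|A|}\mathbb{E}\Big[\prod_{k\in A}\Big(1-\frac{Z_t[k]}{\alpha}\Big)\Big],$$ for a random element $Z_t$ of $\{0,1\}^N$ with exchangeable coordinates. Then $\kappa_{t,A}=\tilde\kappa_{t,|A|}$ with $$\tilde\kappa_{t,k}=\Big(\frac{\alpha}{\bar\alpha}\Big)^{k}\mathbb{E}\big[Q_k(\|Z_t\|;N,\alpha)\big],$$ and $$p_{t-1\to t}(\boldsymbol{x},\boldsymbol{y})=\varphi^{\|\boldsymbol{y}\|}\bar\varphi^{N-\|\boldsymbol{y}\|}\Big\{1+\sum_{k=1}^N\binom{N}{k}\tilde\kappa_{t,k}R_k\big(\|\boldsymbol{x}\|,\|\boldsymbol{y}\|,\langle\boldsymbol{x},\boldsymbol{y}\rangle\big)\Big\},$$ where $R_k$ is the coefficient of $\binom{N}{k}s^k$ in $$G_R(\boldsymbol{x},\boldsymbol{y};s)=(1+s)^{N_{00}}\big(1-(\bar\gamma/\gamma)s\big)^{N_{10}}\big(1-(\bar\varphi/\varphi)s\big)^{N_{01}}\big(1+(\bar\varphi\bar\gamma/(\varphi\gamma))s\big)^{N_{11}},$$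 with $N_{ab}=|\{k:\boldsymbol{x}[k]=a,\boldsymbol{y}[k]=b\}|$, so that $N_{00}=N-\|\boldsymbol{x}\|-\|\boldsymbol{y}\|+\langle\boldsymbol{x},\boldsymbol{y}\rangle$, $N_{01}=\|\boldsymbol{y}\|-\langle\boldsymbol{x},\boldsymbol{y}\rangle$, $N_{10}=\|\boldsymbol{x}\|-\langle\boldsymbol{x},\boldsymbol{y}\rangle$, $N_{11}=\langle\boldsymbol{x},\boldsymbol{y}\rangle$.
   Context: $\bar a=1-a$; $[N]=\{1,\dots,N\}$; $\|\boldsymbol{x}\|$ is the number of ones of $\boldsymbol{x}\in\{0,1\}^N$ and $\langle\boldsymbol{x},\boldsymbol{y}\rangle=\sum_k\boldsymbol{x}[k]\boldsymbol{y}[k]$. The Krawtchouk polynomials $Q_n(\zeta;N,a)$, $n=0,\dots,N$, $a\in(0,1)$, are defined by the generating function $\sum_{n=0}^N\binom{N}{n}Q_n(\zeta;N,a)s^n=(1-(\bar a/a)s)^\zeta(1+s)^{N-\zeta}$; they are orthogonal for the Binomial$(N,a)$ distribution with $Q_n(0;N,a)=1$. *)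

(* Defs.v *)
From HB Require Import structures.
From mathcomp Require Import all_boot all_order all_algebra all_fingroup.
Set Implicit Arguments. Unset Strict Implicit. Unset Printing Implicit Defensive.
Import Order.TTheory GRing.Theory Num.Theory.
Local Open Scope ring_scope.

Definition bvec (N : nat) := {ffun 'I_N -> bool}.

Definition wt (N : nat) (x : bvec N) : nat := (\sum_(k < N) (x k : nat))%N.
Definition ip (N : nat) (x y : bvec N) : nat := (\sum_(k < N) (x k && y k : nat))%N.

(* Krawtchouk polynomial Q_n(zeta; N, a), defined by its generating function:
   sum_n C(N,n) Q_n s^n = (1 - (abar/a) s)^zeta (1+s)^(N - zeta). *)
Definition krawtchouk (R : fieldType) (n zeta N : nat) (a : R) : R :=
  (((1 - ((1 - a) / a)%:P * 'X) ^+ zeta * ('X + 1) ^+ (N - zeta)) `_ n)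
    / ('C(N, n))%:R.

Definition Rcoef (R : fieldType) (N : nat) (phi gamma : R) (k nx ny nxy : nat) : R :=
  let N00 := ((N + nxy) - (nx + ny))%N in
  let N10 := (nx - nxy)%N in
  let N01 := (ny - nxy)%N in
  let N11 := nxy in
  ((('X + 1) ^+ N00
    * (1 - ((1 - gamma) / gamma)%:P * 'X) ^+ N10
    * (1 - ((1 - phi) / phi)%:P * 'X) ^+ N01
    * (1 + (((1 - phi) * (1 - gamma)) / (phi * gamma))%:P * 'X) ^+ N11) `_ k)
    / ('C(N, k))%:R.

Definition is_pmf (R : numDomainType) (N : nat) (P : bvec N -> R) : Prop :=
  (forall z, 0 <= P z) /\ \sum_(z : bvec N) P z = 1.

Definition exchangeable (R : Type) (N : nat) (P : bvec N -> R) : Prop :=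
  forall (s : 'S_N) (z : bvec N), P [ffun k => z (s k)] = P z.

Definition expect (R : pzRingType) (N : nat) (P : bvec N -> R) (f : bvec N -> R) : R :=
  \sum_(z : bvec N) P z * f z.

Definition kappa (R : fieldType) (N : nat) (P : bvec N -> R) (alpha : R)
  (A : {set 'I_N}) : R :=
  (alpha / (1 - alpha)) ^+ #|A|
  * expect P (fun z => \prod_(k in A) (1 - (z k)%:R / alpha)).

Definition kappa_tilde (R : fieldType) (N : nat) (P : bvec N -> R) (alpha : R)
  (k : nat) : R :=
  (alpha / (1 - alpha)) ^+ k * expect P (fun z => krawtchouk k (wt z) N alpha).

(* Main.v *)
Require Import Defs.
From HB Require Import structures.
From mathcomp Require Import all_boot all_order all_algebra all_fingroup.
From mathcomp Require Import zify ring lra.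
Import Order.TTheory GRing.Theory Num.Theory.
Set Implicit Arguments. Unset Strict Implicit.
Local Open Scope ring_scope.

Lemma coef_prod1 (R : comNzRingType) (N n : nat) (w : 'I_N -> R) :
  (\prod_(k < N) ((w k)%:P * 'X + 1))`_n
  = \sum_(A : {set 'I_N} | #|A| == n) \prod_(k in A) w k.
Proof.
rewrite bigA_distr coef_sum [RHS]big_mkcond /=.
apply: eq_bigr => A _.
rewrite -big_mkcond /= big_split /= -rmorph_prod prodr_const coefCM coefXn.
by rewrite eq_sym; case: eqP => _; rewrite ?mulr1 ?mulr0.
Qed.

Lemma prod4 (T : comNzRingType) (N : nat) (x y : bvec N) (p00 p10 p01 p11 : T) :
  \prod_(k < N) (if x k then (if y k then p11 else p10) else (if y k then p01 else p00)) =
  p00 ^+ ((N + ip x y) - (wt x + wt y)) * p10 ^+ (wt x - ip x y)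
  * p01 ^+ (wt y - ip x y) * p11 ^+ ip x y.
Proof.
transitivity (\prod_(k < N) (p00 ^+ (~~ x k && ~~ y k) * p10 ^+ (x k && ~~ y k)
    * p01 ^+ (~~ x k && y k) * p11 ^+ (x k && y k))).
  by apply: eq_bigr => k _; case: (x k); case: (y k); rewrite /= ?expr0 ?expr1 ?mulr1 ?mul1r.
rewrite !big_split /= !prodrXr.
have e10 : (\sum_(k < N) (x k && ~~ y k) + ip x y = wt x)%N.
  by rewrite /ip /wt -big_split; apply: eq_bigr => k _; case: (x k); case: (y k).
have e01 : (\sum_(k < N) (~~ x k && y k) + ip x y = wt y)%N.
  by rewrite /ip /wt -big_split; apply: eq_bigr => k _; case: (x k); case: (y k).
have e00 : (\sum_(k < N) (~~ x k && ~~ y k) + wt x + wt y = N + ip x y)%N.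
  rewrite /ip /wt -!big_split /=.
  rewrite -[X in (_ = X + _)%N]card_ord -sum1_card -big_split /=.
  by apply: eq_bigr => k _; case: (x k); case: (y k).
congr (_ ^+ _ * _ ^+ _ * _ ^+ _ * _ ^+ _).
- by rewrite -e00 -addnA addnK.
- by rewrite -e10 addnK.
- by rewrite -e01 addnK.
Qed.
Definition gA (R : fieldType) (N : nat) (a : R) (A : {set 'I_N}) (z : bvec N) : R :=
  \prod_(k in A) (1 - (z k)%:R / a).

Lemma expect_perm (R : fieldType) (N : nat) (P : bvec N -> R) (a : R) (s : 'S_N)
  (A : {set 'I_N}) : exchangeable P ->
  expect P (gA a A) = expect P (gA a (s @: A)).
Proof.
move=> hP; rewrite /expect.
pose h := fun z : bvec N => [ffun k => z (s k)].
have hinj : injective h.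
  move=> z1 z2 /ffunP e; apply/ffunP => k.
  by have := e (s^-1 k)%g; rewrite !ffunE permKV.
rewrite (reindex_inj hinj); apply: eq_bigr => z _.
rewrite hP /gA big_imset /=; last by move=> i j _ _; apply: perm_inj.
by congr (_ * _); apply: eq_bigr => k _; rewrite ffunE.
Qed.

Lemma expect_card (R : fieldType) (N : nat) (P : bvec N -> R) (a : R) :
  exchangeable P -> forall n (A B : {set 'I_N}), #|A :\: B| = n -> #|A| = #|B| ->
  expect P (gA a A) = expect P (gA a B).
Proof.
move=> hP n; elim: n {-2}n (leqnn n) => [|n IH] m.
  rewrite leqn0 => /eqP -> A B /eqP; rewrite cards_eq0 setD_eq0 => sAB cAB.
  suff -> : A = B by [].
  by apply/eqP; rewrite eqEcard sAB cAB leqnn.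
move=> lemn A B eAB cAB.
have [/eqP|nz] := eqVneq (A :\: B) set0.
  rewrite setD_eq0 => sAB; suff -> : A = B by [].
  by apply/eqP; rewrite eqEcard sAB cAB leqnn.
case/set0Pn: nz => i; rewrite inE => /andP [iB iA].
have [/eqP|nz] := eqVneq (B :\: A) set0.
  rewrite setD_eq0 => sBA.
  have eBA : B = A by apply/eqP; rewrite eqEcard sBA cAB leqnn.
  by rewrite eBA iA in iB.
case/set0Pn: nz => j; rewrite inE => /andP [jA jB].
pose s := tperm i j.
have mem : forall x, (x \in s @: A) = (s x \in A).
  by move=> x; rewrite -preim_permV tpermV inE.
rewrite (expect_perm a s A hP).
have ltc : (#|(s @: A) :\: B| < #|A :\: B|)%N.
  apply: proper_card; apply/properP; split.
    apply/subsetP => x; rewrite !inE mem => /andP [xB].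
    rewrite /s; case: tpermP => [ex|ex|_ _ ->]; first by rewrite (negbTE jA).
      by rewrite ex jB in xB.
    by rewrite xB.
  exists i; first by rewrite !inE iA iB.
  by rewrite !inE mem /s tpermL (negbTE jA) andbF.
apply: (IH (#|(s @: A) :\: B|)) => //.
  by rewrite -ltnS (leq_trans ltc) // eAB.
by rewrite card_imset //; apply: perm_inj.
Qed.

Lemma kraw_poly (R : fieldType) (N : nat) (a : R) (z : bvec N) : a != 0 ->
  (1 - ((1 - a) / a)%:P * 'X) ^+ wt z * ('X + 1) ^+ (N - wt z)
  = \prod_(k < N) ((1 - (z k)%:R / a)%:P * 'X + 1).
Proof.
move=> a0.
rewrite (eq_bigr (fun k => if z k then (if z k then 1 - ((1 - a) / a)%:P * 'X else 0)
   else (if z k then 0 else 'X + 1))); last first.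
  move=> k _; case: (z k) => /=.
    have -> : 1 - 1%:R / a = - ((1 - a) / a) by field.
    by rewrite polyCN mulNr addrC.
  by rewrite mulr0n mul0r subr0 polyC1 mul1r.
rewrite prod4.
have -> : ip z z = wt z by apply: eq_bigr => k _; rewrite andbb.
by rewrite subnDr subnn !expr0 mulr1 mulr1 mulrC.
Qed.

Lemma kraw_sum (R : fieldType) (N n : nat) (a : R) (z : bvec N) : a != 0 ->
  krawtchouk n (wt z) N a = (\sum_(B : {set 'I_N} | #|B| == n) gA a B z) / ('C(N, n))%:R.
Proof. by move=> a0; rewrite /krawtchouk kraw_poly // coef_prod1. Qed.

Lemma part1 (R : realFieldType) (N : nat) (P : bvec N -> R) (a : R) (A : {set 'I_N}) :
  0 < a -> exchangeable P -> kappa P a A = kappa_tilde P a #|A|.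
Proof.
move=> a0 hP; rewrite /kappa /kappa_tilde; congr (_ * _).
have C0 : ('C(N, #|A|))%:R != 0 :> R.
  by rewrite pnatr_eq0 -lt0n bin_gt0 (leq_trans (max_card _)) ?card_ord.
have a0' : a != 0 by rewrite gt_eqF.
transitivity (expect P (gA a A)); first by [].
rewrite /expect; under [RHS]eq_bigr => z _ do rewrite kraw_sum // mulrA.
rewrite -mulr_suml.
under [X in X / _]eq_bigr => z _ do rewrite mulr_sumr.
rewrite exchange_big /=.
rewrite [X in _ = X / _](eq_bigr (fun _ => expect P (gA a A))); last first.
  move=> B /eqP cB; rewrite /expect.
  exact: (@expect_card _ _ P a hP _ B A (erefl _) cB).
rewrite [X in _ = X / _](eq_bigl (fun B => B \in [set B : {set 'I_N} | #|B| == #|A|])); last by move=> B; rewrite inE.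
by rewrite sumr_const card_draws card_ord -[X in _ = X / _]mulr_natr mulfK.
Qed.

Lemma Rcoef_sum (R : fieldType) (N k : nat) (phi gamma : R) (x y : bvec N) :
  phi != 0 -> gamma != 0 ->
  Rcoef N phi gamma k (wt x) (wt y) (ip x y)
  = (\sum_(A : {set 'I_N} | #|A| == k)
       \prod_(i in A) ((1 - (y i)%:R / phi) * (1 - (x i)%:R / gamma))) / ('C(N, k))%:R.
Proof.
move=> p0 g0; rewrite /Rcoef /= -prod4 -coef_prod1; congr (_ / _); congr (nth _ (polyseq _) _); symmetry.
apply: eq_big => // i _; case: (x i); case: (y i); rewrite /= ?mulr0n ?mulr1n ?mul0r ?subr0 ?mulr1 ?mul1r.
- have -> : (1 - phi^-1) * (1 - gamma^-1) = (1 - phi) * (1 - gamma) / (phi * gamma)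
    by field; rewrite p0 g0.
  by rewrite addrC.
- have -> : 1 - gamma^-1 = - ((1 - gamma) / gamma) by field.
  by rewrite polyCN mulNr addrC.
- have -> : 1 - phi^-1 = - ((1 - phi) / phi) by field.
  by rewrite polyCN mulNr addrC.
- by [].
Qed.

Lemma sum_ind (R : nmodType) (N m : nat) (c : R) :
  \sum_(k <- index_iota 1 N.+1) (if m == k then c else 0)
  = if (1 <= m < N.+1)%N then c else 0.
Proof.
case: ifP => h.
  rewrite (bigD1_seq m) ?mem_index_iota ?iota_uniq //= eqxx big1 ?addr0 //.
  by move=> k /negbTE; rewrite eq_sym => ->.
apply: big1_seq => k /=.
rewrite mem_index_iota => hk; case: eqP => // e.
by rewrite e hk in h.
Qed.

Theorem proposition7 (R : realFieldType) (N : nat) (phi gamma : R)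
  (P : bvec N -> R) (p : bvec N -> bvec N -> R) :
  (1 <= N)%N ->
  0 < phi < 1 -> 0 < gamma < 1 -> 1 <= phi + gamma ->
  is_pmf P -> exchangeable P ->
  let alpha := Num.min phi gamma in
  (forall x y : bvec N,
     p x y = phi ^+ wt y * (1 - phi) ^+ (N - wt y)
       * (1 + \sum_(A : {set 'I_N} | A != set0)
                kappa P alpha A
                * \prod_(k in A) ((1 - (y k)%:R / phi) * (1 - (x k)%:R / gamma)))) ->
  (forall A : {set 'I_N}, A != set0 -> kappa P alpha A = kappa_tilde P alpha #|A|)
  /\
  (forall x y : bvec N,
     p x y = phi ^+ wt y * (1 - phi) ^+ (N - wt y)
       * (1 + \sum_(1 <= k < N.+1)
                ('C(N, k))%:R * kappa_tilde P alpha k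
                * Rcoef N phi gamma k (wt x) (wt y) (ip x y))).
Proof.
move=> N1 /andP [p0 p1] /andP [g0 g1] _ _ hP alpha H.
have a0 : 0 < alpha by rewrite /alpha lt_min p0 g0.
have K : forall A : {set 'I_N}, kappa P alpha A = kappa_tilde P alpha #|A|.
  by move=> A; apply: part1.
split; first by move=> A _; apply: K.
move=> x y; rewrite H; congr (_ * (1 + _)).
have p0' : phi != 0 by rewrite gt_eqF.
have g0' : gamma != 0 by rewrite gt_eqF.
set W := fun A : {set 'I_N} =>
  \prod_(k in A) ((1 - (y k)%:R / phi) * (1 - (x k)%:R / gamma)).
rewrite [RHS]big_seq.
rewrite [RHS](eq_bigr (fun k => \sum_(A : {set 'I_N})
    (if #|A| == k then kappa P alpha A * W A else 0))); last first.
  move=> k; rewrite mem_index_iota => /andP [k1 kN].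
  have C0 : ('C(N, k))%:R != 0 :> R by rewrite pnatr_eq0 -lt0n bin_gt0 -ltnS.
  rewrite Rcoef_sum //.
  have e : forall c kk s : R, c != 0 -> c * kk * (s / c) = kk * s.
    by move=> c kk s c0; field.
  rewrite e // mulr_sumr [LHS]big_mkcond /=.
  apply: eq_bigr => A _; case: eqP => // <-.
  by rewrite K.
rewrite -big_seq exchange_big /= [LHS]big_mkcond /=.
apply: eq_bigr => A _.
rewrite (eq_bigr (fun k => if #|A| == k then kappa P alpha A * W A else 0)) //.
rewrite sum_ind; congr (if _ then _ else _).
by rewrite -card_gt0 ltnS (leq_trans (max_card _)) ?card_ord // andbT.
Qed.
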